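(* Let $E$ be a pseudo effect algebra satisfying (RDP) and let $m:E\to\mathbb R$ be a signed measure. Then $m$ is relatively bounded if and only if $m=m_1-m_2$ for some measures $m_1,m_2$ on $E$.
   Context: Pseudo effect algebra: partial algebra $(E;+,0,1)$ such that for all $a,b,c$: (i) $a+b$ and $(a+b)+c$ exist iff $b+c$ and $a+(b+c)$ exist, and then they are equal; (ii) there is exactly one $d$ and one $e$ with $a+d=e+a=1$; (iii) if $a+b$ exists there are $d,e$ with $a+b=d+a=b+e$; (iv) if $1+a$ or $a+1$ exists then $a=0$. Order: $a\le b$ iff $a+c=b$ for some $c$. (RDP): whenever $a_1+a_2=b_1+b_2$ there are $d_1,\dots,d_4$ with $d_1+d_2=a_1$, $d_3+d_4=a_2$, $d_1+d_3=b_1$, $d_2+d_4=b_2$. A signed measure is $m:E\to\mathbb R$ with $m(a+b)=m(a)+m(b)$ whenever $a+b$ is defined; a measure is a signed measure with nonnegative values. A map $m:E\to\mathbb R$ is relatively bounded if $m(W)$ is bounded in $\mathbb R$ for every subset $W\subseteq E$ that is bounded above and below in $E$. *)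

(* Defs.v *)
From Stdlib Require Import Reals.
Open Scope R_scope.

(* Partial addition is modelled as a total function into [option]:
   [pea_add a b = Some c] means "a + b is defined and equals c". *)

Definition opt_bind {A : Type} (o : option A) (f : A -> option A) : option A :=
  match o with Some x => f x | None => None end.

Record PseudoEffectAlgebra := {
  pea_car :> Type;
  pea_add : pea_car -> pea_car -> option pea_car;
  pea_zero : pea_car;
  pea_one : pea_car;
  (* (i): (a+b)+c defined iff a+(b+c) defined, and then equal *)
  pea_assoc : forall a b c : pea_car,
    opt_bind (pea_add a b) (fun x => pea_add x c)
    = opt_bind (pea_add b c) (fun y => pea_add a y);
  pea_compl_r : forall a : pea_car, exists! d, pea_add a d = Some pea_one;
  pea_compl_l : forall a : pea_car, exists! e, pea_add e a = Some pea_one;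
  pea_conj : forall a b s : pea_car, pea_add a b = Some s ->
    exists d e, pea_add d a = Some s /\ pea_add b e = Some s;
  pea_one_l : forall a : pea_car, pea_add pea_one a <> None -> a = pea_zero;
  pea_one_r : forall a : pea_car, pea_add a pea_one <> None -> a = pea_zero
}.

Section Defs.
Variable E : PseudoEffectAlgebra.

Definition pea_le (a b : E) : Prop := exists c, pea_add E a c = Some b.

Definition RDP : Prop :=
  forall a1 a2 b1 b2 s : E,
    pea_add E a1 a2 = Some s -> pea_add E b1 b2 = Some s ->
    exists d1 d2 d3 d4 : E,
      pea_add E d1 d2 = Some a1 /\ pea_add E d3 d4 = Some a2 /\
      pea_add E d1 d3 = Some b1 /\ pea_add E d2 d4 = Some b2.

Definition signed_measure (m : E -> R) : Prop :=
  forall a b s : E, pea_add E a b = Some s -> m s = m a + m b.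

Definition measure (m : E -> R) : Prop :=
  signed_measure m /\ forall a : E, 0 <= m a.

Definition relatively_bounded (m : E -> R) : Prop :=
  forall W : E -> Prop,
    (exists u : E, forall w, W w -> pea_le w u) ->
    (exists l : E, forall w, W w -> pea_le l w) ->
    exists M : R, forall w, W w -> Rabs (m w) <= M.
End Defs.

(* Main.v *)
Require Import Defs.
From Stdlib Require Import Reals Lra.
Open Scope R_scope.

Lemma assoc_lr (E : PseudoEffectAlgebra) (a b c ab r : E) :
  pea_add E a b = Some ab -> pea_add E ab c = Some r ->
  exists bc, pea_add E b c = Some bc /\ pea_add E a bc = Some r.
Proof.
  intros H1 H2. pose proof (pea_assoc E a b c) as H. rewrite H1 in H. simpl in H.
  rewrite H2 in H. destruct (pea_add E b c) as [bc|] eqn:Hbc; simpl in H.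
  - exists bc; auto.
  - discriminate.
Qed.

Lemma assoc_rl (E : PseudoEffectAlgebra) (a b c bc r : E) :
  pea_add E b c = Some bc -> pea_add E a bc = Some r ->
  exists ab, pea_add E a b = Some ab /\ pea_add E ab c = Some r.
Proof.
  intros H1 H2. pose proof (pea_assoc E a b c) as H. rewrite H1 in H. simpl in H.
  rewrite H2 in H. destruct (pea_add E a b) as [ab|] eqn:Hab; simpl in H.
  - exists ab; auto.
  - discriminate.
Qed.

Lemma one_zero_r (E : PseudoEffectAlgebra) :
  pea_add E (pea_one E) (pea_zero E) = Some (pea_one E).
Proof.
  destruct (pea_compl_r E (pea_one E)) as [d [Hd _]].
  assert (d = pea_zero E) by (apply pea_one_l; rewrite Hd; discriminate).
  subst; auto.
Qed.

Lemma zero_one_l (E : PseudoEffectAlgebra) :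
  pea_add E (pea_zero E) (pea_one E) = Some (pea_one E).
Proof.
  destruct (pea_compl_l E (pea_one E)) as [d [Hd _]].
  assert (d = pea_zero E) by (apply pea_one_r; rewrite Hd; discriminate).
  subst; auto.
Qed.

Lemma add_zero_r (E : PseudoEffectAlgebra) (b : E) : pea_add E b (pea_zero E) = Some b.
Proof.
  destruct (pea_compl_l E b) as [e [He _]].
  destruct (assoc_lr E e b (pea_zero E) _ _ He (one_zero_r E)) as [bc [H1 H2]].
  destruct (pea_compl_r E e) as [d [Hd Hu]].
  rewrite H1. f_equal. rewrite <- (Hu b He). symmetry. apply Hu; auto.
Qed.

Lemma add_zero_l (E : PseudoEffectAlgebra) (b : E) : pea_add E (pea_zero E) b = Some b.
Proof.
  destruct (pea_compl_r E b) as [f [Hf _]].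
  destruct (assoc_rl E (pea_zero E) b f _ _ Hf (zero_one_l E)) as [ab [H1 H2]].
  destruct (pea_compl_l E f) as [d [Hd Hu]].
  rewrite H1. f_equal. rewrite <- (Hu b Hf). symmetry. apply Hu; auto.
Qed.

Lemma le_one (E : PseudoEffectAlgebra) (b : E) : pea_le E b (pea_one E).
Proof. destruct (pea_compl_r E b) as [f [Hf _]]. exists f; auto. Qed.

Lemma zero_le (E : PseudoEffectAlgebra) (b : E) : pea_le E (pea_zero E) b.
Proof. exists b. apply add_zero_l. Qed.

Lemma le_refl (E : PseudoEffectAlgebra) (b : E) : pea_le E b b.
Proof. exists (pea_zero E). apply add_zero_r. Qed.

Lemma m_zero (E : PseudoEffectAlgebra) m : signed_measure E m -> m (pea_zero E) = 0.
Proof. intros Hm. pose proof (Hm _ _ _ (add_zero_r E (pea_zero E))). lra. Qed.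

Definition Pset (E : PseudoEffectAlgebra) (m : E -> R) (a : E) : R -> Prop :=
  fun r => exists b, pea_le E b a /\ r = m b.

Lemma Pset_bound (E : PseudoEffectAlgebra) m (M : R) :
  (forall w, m w <= M) -> forall a, bound (Pset E m a).
Proof. intros HM a. exists M. intros r [b [_ ->]]. apply HM. Qed.

Lemma Pset_ne (E : PseudoEffectAlgebra) m a : exists r, Pset E m a r.
Proof. exists (m a). exists a. split; auto. apply le_refl. Qed.

Theorem proposition3p3 (E : PseudoEffectAlgebra) (HRDP : RDP E)
  (m : E -> R) (Hm : signed_measure E m) :
  relatively_bounded E m <->
  exists m1 m2 : E -> R,
    measure E m1 /\ measure E m2 /\ forall a : E, m a = m1 a - m2 a.
Proof.
  split.
  - intros Hrb.
    destruct (Hrb (fun _ => True)) as [M HM].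
    { exists (pea_one E). intros; apply le_one. }
    { exists (pea_zero E). intros; apply zero_le. }
    assert (HM' : forall w, m w <= M).
    { intros w. specialize (HM w I). pose proof (Rle_abs (m w)). lra. }
    set (mp := fun a => proj1_sig (completeness _ (Pset_bound E m M HM' a) (Pset_ne E m a))).
    assert (Hlub : forall a, is_lub (Pset E m a) (mp a)).
    { intros a. unfold mp. destruct completeness; auto. }
    assert (Hge : forall a b, pea_le E b a -> m b <= mp a).
    { intros a b Hb. apply (proj1 (Hlub a)). exists b; auto. }
    assert (Hadd : signed_measure E mp).
    { intros a b s Hs. apply Rle_antisym.
      - apply (proj2 (Hlub s)). intros r [z [[w Hzw] ->]].
        destruct (HRDP _ _ _ _ _ Hzw Hs) as (d1 & d2 & d3 & d4 & H1 & H2 & H3 & H4).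
        rewrite (Hm _ _ _ H1).
        assert (m d1 <= mp a) by (apply Hge; exists d3; auto).
        assert (m d2 <= mp b) by (apply Hge; exists d4; auto). lra.
      - assert (Key : forall x y, pea_le E x a -> pea_le E y b -> m x + m y <= mp s).
        { intros x y [c Hc] [d Hd].
          destruct (assoc_lr E _ _ _ _ _ Hc Hs) as [cb [Hcb Hxcb]].
          destruct (assoc_rl E _ _ _ _ _ Hd Hcb) as [cy [Hcy Hcyd]].
          destruct (pea_conj E _ _ _ Hcy) as [d' [e [_ Hye]]].
          destruct (assoc_lr E _ _ _ _ _ Hye Hcyd) as [ed [Hed Hyed]].
          destruct (assoc_rl E _ _ _ _ _ Hyed Hxcb) as [xy [Hxy Hxys]].
          rewrite <- (Hm _ _ _ Hxy). apply Hge. exists ed; auto. }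
        assert (HA : forall y, pea_le E y b -> mp a <= mp s - m y).
        { intros y Hy. apply (proj2 (Hlub a)). intros r [x [Hx ->]].
          specialize (Key x y Hx Hy). lra. }
        assert (HB : mp b <= mp s - mp a).
        { apply (proj2 (Hlub b)). intros r [y [Hy ->]]. specialize (HA y Hy). lra. }
        lra. }
    exists mp, (fun a => mp a - m a).
    split; [split; auto|split; [split|]].
    + intros a. pose proof (Hge a (pea_zero E) (zero_le E a)).
      rewrite (m_zero E m Hm) in H. lra.
    + intros a b s Hs. rewrite (Hadd _ _ _ Hs), (Hm _ _ _ Hs). lra.
    + intros a. pose proof (Hge a a (le_refl E a)). lra.
    + intros a. lra.
  - intros (m1 & m2 & [Hm1 Hp1] & [Hm2 Hp2] & Heq) W [u Hu] _.
    exists (m1 u + m2 u). intros w Hw. destruct (Hu w Hw) as [c Hc].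
    rewrite (Hm1 _ _ _ Hc), (Hm2 _ _ _ Hc), Heq.
    pose proof (Hp1 w). pose proof (Hp2 w). pose proof (Hp1 c). pose proof (Hp2 c).
    apply Rabs_le. lra.
Qed.
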